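(* Let $n\geq 2$, $1\leq k\leq n-1$ and $w\in\mathfrak{S}_n$. The subsequence of $w$ formed by all its $k$-peaks and $k$-valleys (in the order they appear in $w$) is a longest $k$-zigzagging subsequence of $w$; i.e., $zs_k(w)$ equals the number of $k$-peaks plus the number of $k$-valleys of $w$. Consequently, $E_n(zs_k)$ is two times the average number of $k$-peaks of a permutation in $\mathfrak{S}_n$, i.e. $E_n(zs_k)=\frac{2}{n!}\sum_{w\in\mathfrak{S}_n}\#\{k\text{-peaks of }w\}$.
   Context: $\mathfrak{S}_n$ is the set of permutations $w=w_1\cdots w_n$ of $\{1,\dots,n\}$. A section of $w$ is a consecutive block $w_s\cdots w_t$ ($s\le t$). A section $w_s\cdots w_t$ is a $k$-up if $s<t$ and $w_t-w_s\geq k$, and a $k$-down if $s<t$ and $w_s-w_t\geq k$; a $k$-up/$k$-down ''in'' $w_a\cdots w_b$ means one $w_s\cdots w_t$ with $a\le s<t\le b$. A section $w_i\cdots w_j$ ($i<j$) is $k$-ascending if $w_i=\min\{w_i,\dots,w_j\}$, $w_j=\max\{w_i,\dots,w_j\}$, $w_j-w_i\geq k$, and there is no $k$-down in it; it is $k$-descending if $w_i=\max$, $w_j=\min$ of $\{w_i,\dots,w_j\}$, $w_i-w_j\geq k$, and there is no $k$-up in it. Such a section is maximal if not contained in another section of the same type. If $w_i\cdots w_j$ is maximal $k$-ascending, $w_i$ is a $k$-valley and $w_j$ a $k$-peak of $w$; if it is maximal $k$-descending, $w_i$ is a $k$-peak and $w_j$ a $k$-valley of $w$. A subsequence $w_{i_1}\cdots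 w_{i_s}$ ($i_1<\dots<i_s$) is zigzagging if $w_{i_1}>w_{i_2}<w_{i_3}>\cdots$ or $w_{i_1}<w_{i_2}>w_{i_3}<\cdots$, and $k$-zigzagging if moreover $|w_{i_j}-w_{i_{j+1}}|\geq k$ for all $j$. $zs_k(w)$ is the maximal length of a $k$-zigzagging subsequence of $w$, and $E_n(zs_k)=\frac1{n!}\sum_{w\in\mathfrak{S}_n}zs_k(w)$. *)

(* Defs.v *)
(* Permutations w in S_n are 'S_n = {perm 'I_n}; the value
   w_i is represented by (w i : nat) in {0,..,n-1} (a shift by 1 of the paper's
   values, which does not affect any difference or comparison). *)
From HB Require Import structures.
From mathcomp Require Import all_boot all_order all_algebra all_fingroup.
Set Implicit Arguments. Unset Strict Implicit. Unset Printing Implicit Defensive.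
Import GRing.Theory Num.Theory.

Section KZigzag.
Variables (n k : nat) (w : 'S_n).

Definition wv (i : 'I_n) : nat := w i.

Definition kup (s t : 'I_n) : bool := (s < t) && (wv s + k <= wv t).
Definition kdown (s t : 'I_n) : bool := (s < t) && (wv t + k <= wv s).

Definition no_kdown_in (i j : 'I_n) : bool :=
  [forall s : 'I_n, forall t : 'I_n, ((i <= s) && (t <= j)) ==> ~~ kdown s t].
Definition no_kup_in (i j : 'I_n) : bool :=
  [forall s : 'I_n, forall t : 'I_n, ((i <= s) && (t <= j)) ==> ~~ kup s t].

Definition kasc (i j : 'I_n) : bool :=
  [&& i < j,
      [forall m : 'I_n, ((i <= m) && (m <= j)) ==> (wv i <= wv m) && (wv m <= wv j)],
      wv i + k <= wv j &
      no_kdown_in i j].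

Definition kdesc (i j : 'I_n) : bool :=
  [&& i < j,
      [forall m : 'I_n, ((i <= m) && (m <= j)) ==> (wv j <= wv m) && (wv m <= wv i)],
      wv j + k <= wv i &
      no_kup_in i j].

Definition max_kasc (i j : 'I_n) : bool :=
  kasc i j &&
  [forall i' : 'I_n, forall j' : 'I_n,
     [&& kasc i' j', i' <= i & j <= j'] ==> (i' == i) && (j' == j)].
Definition max_kdesc (i j : 'I_n) : bool :=
  kdesc i j &&
  [forall i' : 'I_n, forall j' : 'I_n,
     [&& kdesc i' j', i' <= i & j <= j'] ==> (i' == i) && (j' == j)].

Definition kpeaks : {set 'I_n} :=
  [set p | [exists i, max_kasc i p] || [exists j, max_kdesc p j]].
Definition kvalleys : {set 'I_n} :=
  [set v | [exists j, max_kasc v j] || [exists i, max_kdesc i v]].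

Definition subseq_at (I : {set 'I_n}) : seq nat := [seq wv i | i <- enum I].

End KZigzag.

Definition kzigzag (k : nat) (s : seq nat) : bool :=
  let m := (size s).-1 in
  [forall j : 'I_m, (nth 0 s j + k <= nth 0 s j.+1) || (nth 0 s j.+1 + k <= nth 0 s j)] &&
  ([forall j : 'I_m, (nth 0 s j.+1 < nth 0 s j) == ~~ odd j] ||
   [forall j : 'I_m, (nth 0 s j < nth 0 s j.+1) == ~~ odd j]).

Definition zs (n k : nat) (w : 'S_n) : nat :=
  \max_(I : {set 'I_n} | kzigzag k (subseq_at w I)) #|I|.

Definition E_zs (n k : nat) : rat :=
  ((\sum_(w : 'S_n) zs k w)%:R / (n`!)%:R)%R.

(* Main.v *)
Require Import Defs.
From HB Require Import structures.
From mathcomp Require Import all_boot all_order all_algebra all_fingroup.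
From mathcomp Require Import zify.
From Stdlib Require Import FunctionalExtensionality.
Import GRing.Theory Num.Theory.
Set Implicit Arguments. Unset Strict Implicit. Unset Printing Implicit Defensive.

Lemma enum_sorted n (I : {set 'I_n}) : sorted (fun a b : 'I_n => a < b) (enum I).
Proof.
have -> : enum I = [seq x <- enum 'I_n | x \in I].
  by rewrite {1}/enum_mem -enumT.
apply: sorted_filter; first by move=> a b c; apply: ltn_trans.
have := iota_ltn_sorted 0 n; rewrite -val_enum_ord sorted_map; by [].
Qed.


Lemma nth_le_sorted n (s : seq 'I_n) x0 i j : sorted (fun a b : 'I_n => a < b) s ->
  i <= j -> j < size s -> nth x0 s i <= nth x0 s j.
Proof.
move=> ss ij js; rewrite leq_eqVlt in ij; case/orP: ij => [/eqP -> //|ij].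
apply: ltnW; apply: (sorted_ltn_nth (leT := fun a b : 'I_n => a < b)) => //.
- by move=> a b c; apply: ltn_trans.
- by rewrite inE; apply: ltn_trans js.
Qed.

Lemma nth_lt_sorted n (s : seq 'I_n) x0 i j : sorted (fun a b : 'I_n => a < b) s ->
  i < j -> j < size s -> nth x0 s i < nth x0 s j.
Proof.
move=> ss ij js; apply: (sorted_ltn_nth (leT := fun a b : 'I_n => a < b)) => //.
- by move=> a b c; apply: ltn_trans.
- by rewrite inE; apply: ltn_trans js.
Qed.

Lemma enum_consec n (U : {set 'I_n}) x0 j : j.+1 < size (enum U) ->
  nth x0 (enum U) j < nth x0 (enum U) j.+1 /\
  forall x : 'I_n, nth x0 (enum U) j < x -> x < nth x0 (enum U) j.+1 -> x \notin U.
Proof.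
move=> js; have ss := enum_sorted U.
split; first by apply: nth_lt_sorted.
move=> x ax xb; apply/negP => xU.
have xe : x \in enum U by rewrite mem_enum.
have E := nth_index x0 xe; have ix : index x (enum U) < size (enum U) by rewrite index_mem.
case: (leqP (index x (enum U)) j) => ij.
- have H := nth_le_sorted x0 ss ij (ltnW js); rewrite E in H; have := leq_ltn_trans H ax; by rewrite ltnn.
- have H := nth_le_sorted x0 ss ij ix; rewrite E in H; have := leq_ltn_trans H xb; by rewrite ltnn.
Qed.

Section Gen.
Variables (n k N : nat).
Hypothesis k1 : 0 < k.

Definition flp (h : 'I_n -> nat) : 'I_n -> nat := fun x => N - h x.
Definition good (h : 'I_n -> nat) := injective h /\ forall x : ordinal n, h x <= N.

Definition gnokd (h : 'I_n -> nat) (i j : 'I_n) : bool :=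
  [forall s : 'I_n, forall t : 'I_n, ((i <= s) && (t <= j)) ==> ~~ ((s < t) && (h t + k <= h s))].
Definition gasc (h : 'I_n -> nat) (i j : 'I_n) : bool :=
  [&& i < j,
      [forall m : 'I_n, ((i <= m) && (m <= j)) ==> (h i <= h m) && (h m <= h j)],
      h i + k <= h j &
      gnokd h i j].
Definition gnoku (h : 'I_n -> nat) (i j : 'I_n) : bool :=
  [forall s : 'I_n, forall t : 'I_n, ((i <= s) && (t <= j)) ==> ~~ ((s < t) && (h s + k <= h t))].
Definition gdesc (h : 'I_n -> nat) (i j : 'I_n) : bool :=
  [&& i < j,
      [forall m : 'I_n, ((i <= m) && (m <= j)) ==> (h j <= h m) && (h m <= h i)],
      h j + k <= h i &
      gnoku h i j].

Definition maxsec (R : rel 'I_n) (i j : 'I_n) : bool :=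
  R i j &&
  [forall i' : 'I_n, forall j' : 'I_n,
     [&& R i' j', i' <= i & j <= j'] ==> (i' == i) && (j' == j)].

Definition PKr (R D : rel 'I_n) : {set 'I_n} :=
  [set p | [exists i, maxsec R i p] || [exists j, maxsec D p j]].
Definition VLr (R D : rel 'I_n) : {set 'I_n} :=
  [set v | [exists j, maxsec R v j] || [exists i, maxsec D i v]].

Lemma gascP (h : 'I_n -> nat) (i j : 'I_n) : reflect
  [/\ i < j, forall m : 'I_n, i <= m -> m <= j -> h i <= h m /\ h m <= h j,
      h i + k <= h j & forall s t : 'I_n, i <= s -> t <= j -> s < t -> h s < h t + k]
  (gasc h i j).
Proof.
apply: (iffP idP).
- case/and4P=> ij /forallP Hm hk /forallP Hd; split=> //.
  + by move=> m im mj; have /implyP/(_ _)/andP := Hm m; rewrite im mj => /(_ isT) [].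
  + move=> s t si tj st; have /forallP/(_ t)/implyP := Hd s.
    rewrite si tj st /= => /(_ isT); rewrite -ltnNge.
    by [].
- case=> ij Hm hk Hd; apply/and4P; split=> //.
  + apply/forallP=> m; apply/implyP=> /andP[im mj]; have [-> ->] := Hm m im mj; by [].
  + apply/forallP=> s; apply/forallP=> t; apply/implyP=> /andP[si tj].
    apply/negP=> /andP[st]; rewrite leqNgt; have -> := Hd s t si tj st; by [].
Qed.

Lemma gdescP (h : 'I_n -> nat) (i j : 'I_n) : reflect
  [/\ i < j, forall m : 'I_n, i <= m -> m <= j -> h j <= h m /\ h m <= h i,
      h j + k <= h i & forall s t : 'I_n, i <= s -> t <= j -> s < t -> h t < h s + k]
  (gdesc h i j).
Proof.
apply: (iffP idP).
- case/and4P=> ij /forallP Hm hk /forallP Hd; split=> //.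
  + by move=> m im mj; have /implyP/(_ _)/andP := Hm m; rewrite im mj => /(_ isT) [].
  + move=> s t si tj st; have /forallP/(_ t)/implyP := Hd s.
    rewrite si tj st /= => /(_ isT); rewrite -ltnNge.
    by [].
- case=> ij Hm hk Hd; apply/and4P; split=> //.
  + apply/forallP=> m; apply/implyP=> /andP[im mj]; have [-> ->] := Hm m im mj; by [].
  + apply/forallP=> s; apply/forallP=> t; apply/implyP=> /andP[si tj].
    apply/negP=> /andP[st]; rewrite leqNgt; have -> := Hd s t si tj st; by [].
Qed.


Lemma good_flp h : good h -> good (flp h).
Proof.
case=> hi hb; split=> [x y|x]; rewrite /flp; last by lia.
move=> E; apply: hi; have := hb x; have := hb y; lia.
Qed.

Lemma flpK h : good h -> flp (flp h) = h.
Proof. case=> _ hb; apply: functional_extensionality => x; rewrite /flp; have := hb x; lia. Qed.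

Lemma gasc_flp h : good h -> gasc (flp h) = gdesc h.
Proof.
case=> _ hb; apply: functional_extensionality => i; apply: functional_extensionality => j.
rewrite /flp; apply/gascP/gdescP => -[ij Hm hk Hd]; split => //.
- move=> m im mj; have := Hm m im mj; have := hb i; have := hb j; have := hb m; lia.
- have := hb i; have := hb j; lia.
- move=> s t si tj st; have := Hd s t si tj st; have := hb s; have := hb t; lia.
- move=> m im mj; have := Hm m im mj; have := hb i; have := hb j; have := hb m; lia.
- have := hb i; have := hb j; lia.
- move=> s t si tj st; have := Hd s t si tj st; have := hb s; have := hb t; lia.
Qed.

Lemma gdesc_flp h : good h -> gdesc (flp h) = gasc h.
Proof. move=> gh; by rewrite -(gasc_flp (good_flp gh)) (flpK gh). Qed.

Lemma maxsecP (R : rel 'I_n) a b : maxsec R a b ->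
  R a b /\ forall c d, R c d -> c <= a -> b <= d -> c = a :> nat /\ d = b :> nat.
Proof.
case/andP=> Rab /forallP M; split=> // c d Rcd ca bd.
have /forallP/(_ d)/implyP := M c; rewrite Rcd ca bd => /(_ isT) /andP[/eqP -> /eqP ->].
by [].
Qed.

Lemma asc_join h (a b c d : 'I_n) : a <= c -> c <= b -> b <= d ->
  gasc h a b -> gasc h c d -> gasc h a d.
Proof.
move=> ac cb bd /gascP[ab H1 k1' D1] /gascP[cd H2 k2 D2]; apply/gascP; split.
- lia.
- move=> m am md; case: (leqP m b) => mb.
  + have := H1 m am mb; have := H2 b cb bd; lia.
  + have := H2 m (leq_trans cb (ltnW mb)) md; have := H1 c ac cb; lia.
- have := H2 b cb bd; lia.
- move=> s t si tj st; case: (leqP t b) => tb; first by apply: D1.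
  case: (leqP c s) => cs; first by apply: D2.
  have := H1 s si (ltnW (leq_trans cs cb)); have := D2 b t cb tj tb; lia.
Qed.

Lemma max_overlap h (a b c d : 'I_n) : maxsec (gasc h) a b -> gasc h c d ->
  c <= b -> a <= d -> a <= c /\ d <= b.
Proof.
move=> /maxsecP[Hab M] Hcd cb ad.
have /gascP[ab _ _ _] := Hab; have /gascP[cd _ _ _] := Hcd.
case: (leqP a c) => ac; case: (leqP d b) => db //.
- have := M a d (asc_join ac cb (ltnW db) Hab Hcd) (leqnn _) (ltnW db); lia.
- have := M c b (asc_join (ltnW ac) ad db Hcd Hab) (ltnW ac) (leqnn _); lia.
- have := M c d Hcd (ltnW ac) (ltnW db); lia.
Qed.

Lemma max_max h (a b c d : 'I_n) : maxsec (gasc h) a b -> maxsec (gasc h) c d ->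
  c <= b -> a <= d -> a = c :> nat /\ b = d :> nat.
Proof.
move=> Mab Mcd cb ad.
have [Hab _] := maxsecP Mab; have [Hcd _] := maxsecP Mcd.
have := max_overlap Mab Hcd cb ad; have := max_overlap Mcd Hab ad cb; lia.
Qed.

Lemma asc_desc h (a b c d : 'I_n) : injective h -> gasc h a b -> gdesc h c d ->
  c < b -> a < d -> False.
Proof.
move=> hi /gascP[ab H1 k1' D1] /gdescP[cd H2 k2 D2] cb ad.
case: (leqP a c) => ac; case: (leqP d b) => db.
- have := D1 c d ac db cd; lia.
- have := H1 c ac (ltnW cb); have := H2 b (ltnW cb) (ltnW db) => HH1 HH2.
  have E : h b = h c by lia.
  have := hi _ _ E => /(congr1 val) /=; lia.
- have := H1 d (ltnW ad) db; have := H2 a (ltnW ac) (ltnW ad) => HH1 HH2.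
  have E : h a = h d by lia.
  have := hi _ _ E => /(congr1 val) /=; lia.
- have := D2 a b (ltnW ac) (ltnW db) ab; lia.
Qed.

Lemma ex_max h (i j : 'I_n) : gasc h i j ->
  exists (a b : 'I_n), [/\ maxsec (gasc h) a b, a <= i & j <= b].
Proof.
move=> Hij.
pose P (p : 'I_n * 'I_n) := [&& gasc h p.1 p.2, p.1 <= i & j <= p.2].
have P0 : P (i, j) by rewrite /P /= Hij !leqnn.
case: (arg_maxnP (fun p : 'I_n * 'I_n => p.2 - p.1) P0) => [[a b]] /= /and3P[Hab ai jb] Mx.
exists a, b; split=> //; apply/andP; split=> //.
apply/forallP=> c; apply/forallP=> d; apply/implyP=> /and3P[Hcd ca bd].
have Pcd : P (c, d) by rewrite /P /= Hcd (leq_trans ca ai) (leq_trans jb bd).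
have := Mx _ Pcd => /=.
have /gascP[cd _ _ _] := Hcd; have /gascP[ab _ _ _] := Hab.
move=> HH; apply/andP; split; apply/eqP; apply: val_inj => /=; lia.
Qed.

Lemma kup_asc h (s t : 'I_n) : s < t -> h s + k <= h t ->
  exists (a b : 'I_n), [/\ s <= a, b <= t & gasc h a b].
Proof.
move=> st hst.
pose P (p : 'I_n * 'I_n) := [&& s <= p.1, p.1 < p.2, p.2 <= t & h p.1 + k <= h p.2].
have P0 : P (s, t) by rewrite /P /= leqnn st leqnn hst.
case: (arg_minnP (fun p : 'I_n * 'I_n => p.2 - p.1) P0) => [[a b]] /= /and4P[sa ab bt hab] Mn.
move: sa ab bt hab => /= sa ab bt hab.
have Hm : forall m : 'I_n, a <= m -> m <= b -> h a <= h m /\ h m <= h b.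
  move=> m am mb; split.
  + rewrite leqNgt; apply/negP => hm.
    have mb' : m < b.
      rewrite ltn_neqAle mb andbT; apply/eqP => /ord_inj E; subst; lia.
    have Pm : P (m, b) by rewrite /P /= mb' bt (leq_trans sa am); lia.
    have am' : a < m.
      rewrite ltn_neqAle am andbT; apply/eqP => /ord_inj E; subst; lia.
    have := Mn _ Pm => /=; lia.
  + rewrite leqNgt; apply/negP => hm.
    have am' : a < m.
      rewrite ltn_neqAle am andbT; apply/eqP => /ord_inj E; subst; lia.
    have Pm : P (a, m) by rewrite /P /= am' sa (leq_trans mb bt); lia.
    have mb' : m < b.
      rewrite ltn_neqAle mb andbT; apply/eqP => /ord_inj E; subst; lia.
    have := Mn _ Pm => /=; lia.
exists a, b; split=> //; apply/gascP; split=> //.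
move=> c d ac db cd; rewrite ltnNge; apply/negP => hcd.
have [Hd1 _] := Hm d (leq_trans ac (ltnW cd)) db.
have ac' : a < c.
  rewrite ltn_neqAle ac andbT; apply/eqP => /ord_inj E; subst; lia.
have cb : c < b by apply: leq_trans cd db.
have Pc : P (a, c) by rewrite /P /= ac' sa (leq_trans (ltnW cb) bt) /=; lia.
have := Mn _ Pc => /=; lia.
Qed.

Lemma trich (j a m : 'I_n) : j <= m -> m <= a -> [\/ m = j, (j < m) && (m < a) | m = a].
Proof.
move=> jm ma; case: (ltnP j m) => jm'; last by apply: Or31; apply: ord_inj; lia.
case: (ltnP m a) => ma'; last by apply: Or33; apply: ord_inj; lia.
by apply: Or32; apply/andP; split.
Qed.

Lemma F3 h (i j : 'I_n) : good h -> maxsec (gasc h) i j ->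
  (exists b, maxsec (gasc (flp h)) j b) \/
  (forall x : 'I_n, j < x -> h x < h j /\ h j < h x + k).
Proof.
move=> gh M; have [hi hb] := gh; have [Hij Mx] := maxsecP M.
have /gascP[ij H1 hk D1] := Hij.
pose C (x : 'I_n) := (j < x) && ((h j <= h x) || (h x + k <= h j)).
case: (pickP C) => [x0 Cx0|none]; last first.
  right=> x jx; have := none x; rewrite /C jx /= => /negbT; rewrite negb_or -!ltnNge.
  by case/andP=> A B; split.
case: (arg_minnP (fun x : 'I_n => val x) Cx0) => a /andP[ja Ca] Mn.
have btw : forall x : 'I_n, j < x -> x < a -> h x < h j /\ h j < h x + k.
  move=> x jx xa; case Cx: (C x); first by have := Mn x Cx => /=; lia.
  move: Cx; rewrite /C jx /= => /negbT; rewrite negb_or -!ltnNge.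
  by case/andP=> A B; split.
case/orP: Ca => ha.
- exfalso.
  have Hia : gasc h i a.
    apply/gascP; split.
    + lia.
    + move=> m im ma; case: (leqP m j) => mj; first by have := H1 m im mj; lia.
      case: (ltnP m a) => ma'; first by have := btw m mj ma'; lia.
      have E : m = a by apply: ord_inj; lia.
      subst; lia.
    + lia.
    + move=> s t si ta st; case: (leqP t j) => tj; first by apply: D1.
      have ht : h j < h t + k.
        case: (ltnP t a) => ta'; first by have := btw t tj ta'; lia.
        have E : t = a by apply: ord_inj; lia.
        subst; lia.
      case: (leqP s j) => sj; first by have := H1 s si sj; lia.
      have := btw s sj (leq_trans st ta); lia.
  have := Mx i a Hia (leqnn _) (ltnW ja); lia.
- left.
  have Hja : gdesc h j a.
    apply/gdescP; split.
    + by [].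
    + move=> m jm ma; case: (trich jm ma) => [E|/andP[jm' ma']|E]; try (subst; lia).
      have := btw m jm' ma'; lia.
    + by [].
    + move=> s t js ta st.
      have ht : h t < h j.
        case: (ltnP t a) => ta'; first by have := btw t (leq_ltn_trans js st) ta'; lia.
        have E : t = a by apply: ord_inj; lia.
        subst; lia.
      case: (ltnP j s) => js'; last by have E : s = j; [apply: ord_inj; lia | subst; lia].
      have := btw s js' (leq_trans st ta); lia.
  have Hja' : gasc (flp h) j a by rewrite gasc_flp.
  have [c [d [Mcd cj ad]]] := ex_max Hja'.
  have [Hcd _] := maxsecP Mcd; rewrite gasc_flp // in Hcd.
  case: (ltnP c j) => cj'.
    by exfalso; apply: (asc_desc hi Hij Hcd cj'); lia.
  have E : c = j by apply: ord_inj; lia.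
  by rewrite -E; exists d.
Qed.


Definition PK h := PKr (gasc h) (gasc (flp h)).
Definition VL h := VLr (gasc h) (gasc (flp h)).
Definition UU h := PK h :|: VL h.

Lemma PK_flp h : good h -> PK (flp h) = VL h.
Proof. by move=> gh; apply/setP => x; rewrite /PK /VL /PKr /VLr (flpK gh) !inE orbC. Qed.

Lemma VL_flp h : good h -> VL (flp h) = PK h.
Proof. by move=> gh; apply/setP => x; rewrite /PK /VL /PKr /VLr (flpK gh) !inE orbC. Qed.

Lemma UU_flp h : good h -> UU (flp h) = UU h.
Proof. move=> gh; rewrite /UU (PK_flp gh) (VL_flp gh); exact: setUC. Qed.

Lemma PKP h x : reflect ((exists i, maxsec (gasc h) i x) \/ (exists j, maxsec (gasc (flp h)) x j))
  (x \in PK h).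
Proof.
rewrite /PK /PKr inE; apply: (iffP orP) => -[/existsP H|/existsP H]; by [left|right].
Qed.

Lemma VLP h x : reflect ((exists j, maxsec (gasc h) x j) \/ (exists i, maxsec (gasc (flp h)) i x))
  (x \in VL h).
Proof.
rewrite /VL /VLr inE; apply: (iffP orP) => -[/existsP H|/existsP H]; by [left|right].
Qed.

Lemma PK_VL h x : good h -> x \in PK h -> x \in VL h -> False.
Proof.
move=> gh; have [hi hb] := gh.
case/PKP => [[i A]|[j B]]; case/VLP => [[j' C]|[i' D]].
- have [HC _] := maxsecP C; have /gascP[xj' _ _ _] := HC.
  have := max_overlap A HC (leqnn _); have [HA _] := maxsecP A; have /gascP[ix _ _ _] := HA.
  move=> HH; have := HH (leq_trans (ltnW ix) (ltnW xj')); lia.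
- have [HA _] := maxsecP A; have [HD _] := maxsecP D; rewrite gasc_flp // in HD.
  have /gascP[ix _ _ _] := HA; have /gdescP[i'x _ _ _] := HD.
  exact: (asc_desc hi HA HD i'x ix).
- have [HB _] := maxsecP B; have [HC _] := maxsecP C; rewrite gasc_flp // in HB.
  have /gascP[xj' _ _ _] := HC; have /gdescP[xj _ _ _] := HB.
  exact: (asc_desc hi HC HB xj' xj).
- have [HB _] := maxsecP B; have /gascP[xj _ _ _] := HB.
  have [HD _] := maxsecP D; have /gascP[i'x _ _ _] := HD.
  have := max_overlap D HB (leqnn _) (leq_trans (ltnW i'x) (ltnW xj)); lia.
Qed.

Lemma UU_end h x : x \in UU h -> exists (a b : 'I_n),
  (maxsec (gasc h) a b \/ maxsec (gasc (flp h)) a b) /\ (x = a \/ x = b).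
Proof.
rewrite inE => /orP[/PKP[[i A]|[j B]]|/VLP[[j C]|[i D]]].
- by exists i, x; split; [left|right].
- by exists x, j; split; [right|left].
- by exists x, j; split; [left|left].
- by exists i, x; split; [right|right].
Qed.

Lemma no_inside h (a b x : 'I_n) : good h -> maxsec (gasc h) a b -> x \in UU h ->
  a < x -> x < b -> False.
Proof.
move=> gh; have [hi hb] := gh => Mab /UU_end [c [d [[S|S] E]]] ax xb.
- have [HS _] := maxsecP S; have /gascP[cd _ _ _] := HS.
  have [] : c <= b /\ a <= d by case: E => E; subst; lia.
  move=> cb ad; have := max_max Mab S cb ad; case: E => E; subst; lia.
- have [HS _] := maxsecP S; rewrite gasc_flp // in HS; have /gdescP[cd _ _ _] := HS.
  have [HA _] := maxsecP Mab.
  have [] : c < b /\ a < d by case: E => E; subst; lia.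
  move=> cb ad; exact: (asc_desc hi HA HS cb ad).
Qed.

Lemma next_VL h (u u' : 'I_n) : good h -> u \in VL h -> u' \in UU h -> u < u' ->
  (forall x : 'I_n, u < x -> x < u' -> x \notin UU h) -> maxsec (gasc h) u u'.
Proof.
move=> gh; have [hi hb] := gh => uV u'U uu' gap.
have [j Muj] : exists j, maxsec (gasc h) u j.
  case/VLP: uV => [//|[i D]].
  case: (F3 (good_flp gh) D) => [[b]|win]; first by rewrite (flpK gh) => Mb; exists b.
  exfalso.
  have win' : forall x : 'I_n, u <= x -> h u <= h x /\ h x < h u + k.
    move=> x ux; case: (ltnP u x) => ux'.
      have := win x ux'; rewrite /flp; have := hb x; have := hb u; lia.
    have E : x = u by apply: ord_inj; lia.
    subst; lia.
  have [HD _] := maxsecP D; have /gascP[iu _ _ _] := HD.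
  have [a [b [S E]]] := UU_end u'U.
  case: (leqP u a) => ua.
  + case: S => S; have [HS _] := maxsecP S.
    * have /gascP[ab _ hk _] := HS.
      have := win' a ua; have := win' b (leq_trans ua (ltnW ab)); lia.
    * have /gascP[ab _ hk _] := HS; move: hk; rewrite /flp.
      have := win' a ua; have := win' b (leq_trans ua (ltnW ab)); have := hb a; have := hb b; lia.
  + have Eb : u' = b by case: E => // E; subst; lia.
    subst u'.
    case: S => S; have [HS _] := maxsecP S.
    * rewrite gasc_flp // in HD.
      by apply: (asc_desc hi HS HD); lia.
    * have /gascP[ab _ _ _] := HS.
      have := max_overlap D HS (ltnW ua) (leq_trans (ltnW iu) (ltnW uu')); lia.
have jU : j \in UU h by rewrite inE; apply/orP; left; apply/PKP; left; exists u.
have [Huj _] := maxsecP Muj; have /gascP[uj _ _ _] := Huj.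
case: (ltngtP j u') => ju'.
- by have := gap j uj ju'; rewrite jU.
- by exfalso; apply: (no_inside gh Muj u'U uu' ju').
- have E : j = u' by apply: ord_inj.
  by rewrite -E.
Qed.


Lemma next_PK h (u u' : 'I_n) : good h -> u \in PK h -> u' \in UU h -> u < u' ->
  (forall x : 'I_n, u < x -> x < u' -> x \notin UU h) -> maxsec (gasc (flp h)) u u'.
Proof.
move=> gh uP u'U uu' gap.
have g' := good_flp gh.
have H1 : u \in VL (flp h) by rewrite (VL_flp gh).
have H2 : u' \in UU (flp h) by rewrite (UU_flp gh).
have H3 : forall x : 'I_n, u < x -> x < u' -> x \notin UU (flp h).
  move=> x ux xu; rewrite (UU_flp gh); exact: gap.
exact: (next_VL g' H1 H2 uu' H3).
Qed.

Lemma step h (a b : 'I_n) : good h -> a \in UU h -> b \in UU h -> a < b ->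
  (forall x : 'I_n, a < x -> x < b -> x \notin UU h) ->
  [/\ (a \in PK h) = (h b < h a), (b \in PK h) = ~~ (a \in PK h) &
      (h a + k <= h b) || (h b + k <= h a)].
Proof.
move=> gh; have [hi hb] := gh => aU bU ab gap.
case aP: (a \in PK h).
- have M := next_PK gh aP bU ab gap; have [HM _] := maxsecP M.
  rewrite gasc_flp // in HM; have /gdescP[_ _ hk _] := HM.
  have bV : b \in VL h by apply/VLP; right; exists a.
  have bP : b \notin PK h by apply/negP => bP; apply: (PK_VL gh bP bV).
  have hba : h b < h a by lia.
  split; [by rewrite hba| by rewrite (negbTE bP) | apply/orP; right; lia].
- have aV : a \in VL h by move: aU; rewrite inE aP.
  have M := next_VL gh aV bU ab gap; have [HM _] := maxsecP M.
  have /gascP[_ _ hk _] := HM.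
  have bP : b \in PK h by apply/PKP; left; exists a.
  have hba : ~~ (h b < h a) by rewrite -leqNgt; lia.
  split; [by rewrite (negbTE hba)| by rewrite bP | apply/orP; left; lia].
Qed.


Lemma zig_UU h (x0 : 'I_n) : good h -> kzigzag k (map h (enum (UU h))).
Proof.
move=> gh; set e := enum (UU h).
have inU : forall j, j < size e -> nth x0 e j \in UU h.
  by move=> j js; rewrite -mem_enum; apply: mem_nth.
have st : forall j, j.+1 < size e ->
  [/\ (nth x0 e j \in PK h) = (h (nth x0 e j.+1) < h (nth x0 e j)),
      (nth x0 e j.+1 \in PK h) = ~~ (nth x0 e j \in PK h) &
      (h (nth x0 e j) + k <= h (nth x0 e j.+1)) || (h (nth x0 e j.+1) + k <= h (nth x0 e j))].
  move=> j js; have [ab gap] := enum_consec x0 js.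
  by apply: step => //; apply: inU => //; apply: ltnW.
have typ : forall j, j < size e -> (nth x0 e j \in PK h) = (nth x0 e 0 \in PK h) (+) odd j.
  elim => [|j IH] js; first by rewrite addbF.
  have [_ E _] := st j js; rewrite E IH ?(ltnW js) //=.
  by rewrite addbN.
have nthm : forall j, j < size e -> nth 0 (map h e) j = h (nth x0 e j).
  by move=> j js; rewrite (nth_map x0).
have jsz : forall j : 'I_(size (map h e)).-1, j.+1 < size e.
  case=> j Hj /=; rewrite size_map in Hj; lia.
rewrite /kzigzag; apply/andP; split.
- apply/forallP => j; have js := jsz j; rewrite !nthm //; last exact: ltnW.
  by case: (st j js).
- case P0: (nth x0 e 0 \in PK h); [apply/orP; left | apply/orP; right];
    apply/forallP => j; have js := jsz j; rewrite !nthm //; try exact: ltnW;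
    have [E _ G] := st j js.
  + by rewrite -E typ ?P0 ?addTb //; apply: ltnW.
  + have -> : (h (nth x0 e j) < h (nth x0 e j.+1)) = ~~ (h (nth x0 e j.+1) < h (nth x0 e j)).
      rewrite -leqNgt; apply/idP/idP => [/ltnW //|]; case/orP: G => G; lia.
    by rewrite -E typ ?P0 //; apply: ltnW.
Qed.


Lemma zig_facts (h : 'I_n -> nat) (t : seq 'I_n) (x0 : 'I_n) : kzigzag k (map h t) ->
  (forall j, j.+1 < size t -> (h (nth x0 t j) + k <= h (nth x0 t j.+1)) ||
                              (h (nth x0 t j.+1) + k <= h (nth x0 t j))) /\
  (forall j, j.+2 < size t ->
     (h (nth x0 t j.+1) < h (nth x0 t j.+2)) = ~~ (h (nth x0 t j) < h (nth x0 t j.+1))).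
Proof.
have nthm : forall j, j < size t -> nth 0 (map h t) j = h (nth x0 t j).
  by move=> j js; rewrite (nth_map x0).
have ord : forall j, j.+1 < size t -> j < (size (map h t)).-1.
  by move=> j; rewrite size_map; case: (size t) => //.
case/andP => /forallP G A.
have Gap : forall j, j.+1 < size t -> (h (nth x0 t j) + k <= h (nth x0 t j.+1)) ||
                              (h (nth x0 t j.+1) + k <= h (nth x0 t j)).
  move=> j js; have := G (Ordinal (ord j js)); rewrite /= !nthm //; exact: ltnW.
have ltN : forall j, j.+1 < size t ->
    (h (nth x0 t j) < h (nth x0 t j.+1)) = ~~ (h (nth x0 t j.+1) < h (nth x0 t j)).
  move=> j js; have := Gap j js; rewrite -leqNgt => /orP[] g;
  apply/idP/idP => [/ltnW //|]; lia.
split=> // j js.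
have js1 : j.+1 < size t by apply: ltnW.
case/orP: A => /forallP A.
- have := A (Ordinal (ord j js1)); have := A (Ordinal (ord j.+1 js)).
  rewrite /= !nthm //; try exact: ltnW.
  move=> /eqP E1 /eqP E2.
  by rewrite (ltN _ js) E1 (ltN _ js1) E2 negbK.
- have := A (Ordinal (ord j js1)); have := A (Ordinal (ord j.+1 js)).
  rewrite /= !nthm //; try exact: ltnW.
  move=> /eqP E1 /eqP E2.
  by rewrite E1 E2 negbK.
Qed.


Lemma zig_bound_seq (h : 'I_n -> nat) (t : seq 'I_n) : good h -> (exists u : ordinal n, u \in UU h) ->
  sorted (fun a b : 'I_n => a < b) t -> kzigzag k (map h t) -> size t <= #|UU h|.
Proof.
move=> gh [u0 u0U] ss Z; have [hi hb] := gh.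
have [G Alt] := zig_facts u0 Z.
pose up j := h (nth u0 t j) < h (nth u0 t j.+1).
pose mx := [arg max_(x > u0 in UU h) (x : nat)].
have [mxU mxM] : mx \in UU h /\ forall x, x \in UU h -> x <= mx.
  by rewrite /mx; case: arg_maxnP.
case Lt: (size t) => [//|L].
pose Q (j : 'I_L) (a : 'I_n) : bool := [exists b : 'I_n, exists c : 'I_n, exists d : 'I_n,
  [&& nth u0 t j <= c, c < d, d <= nth u0 t j.+1, a <= c, d <= b &
      if up j then maxsec (gasc h) a b && gasc h c d
      else maxsec (gasc (flp h)) a b && gasc (flp h) c d]].
have QP : forall j a, Q j a -> exists b c d : 'I_n,
  [/\ nth u0 t j <= c, c < d, d <= nth u0 t j.+1, a <= c & d <= b] /\
  (if up j then maxsec (gasc h) a b /\ gasc h c d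
   else maxsec (gasc (flp h)) a b /\ gasc (flp h) c d).
  move=> j a /existsP[b /existsP[c /existsP[d /and5P[H1 H2 H3 H4 /andP[H5 H6]]]]].
  exists b, c, d; split=> //; case: (up j) H6 => /andP[]; by split.
have Qex : forall j : 'I_L, exists a, Q j a.
  move=> j; have js : j.+1 < size t by rewrite Lt ltnS.
  have ab : nth u0 t j < nth u0 t j.+1 := nth_lt_sorted u0 ss (ltnSn j) js.
  have Gj := G j js.
  case U: (up j).
  - have hk : h (nth u0 t j) + k <= h (nth u0 t j.+1).
      move: U; rewrite /up /= => U; case/orP: Gj => g; lia.
    have [c [d [ac db Hcd]]] := kup_asc ab hk.
    have [a [b [Mab ca db']]] := ex_max Hcd.
    exists a; apply/existsP; exists b; apply/existsP; exists c; apply/existsP; exists d.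
    have /gascP[cd _ _ _] := Hcd.
    by rewrite ac cd db ca db' U Mab Hcd.
  - have hk : flp h (nth u0 t j) + k <= flp h (nth u0 t j.+1).
      move: U; rewrite /up /flp /= => /negbT; rewrite -leqNgt => U'.
      have hbj : h (nth u0 t j) <= N := hb _.
      have hbj1 : h (nth u0 t j.+1) <= N := hb _.
      case/orP: Gj => g; lia.
    have [c [d [ac db Hcd]]] := kup_asc ab hk.
    have [a [b [Mab ca db']]] := ex_max Hcd.
    exists a; apply/existsP; exists b; apply/existsP; exists c; apply/existsP; exists d.
    have /gascP[cd _ _ _] := Hcd.
    by rewrite ac cd db ca db' U Mab Hcd.
have Qin : forall j a, Q j a -> a \in UU h :\ mx.
  move=> j a /QP[b [c [d [[_ cd _ ac db] HH]]]].
  have [aU bU] : a \in UU h /\ b \in UU h.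
    case: (up j) HH => -[M _].
    + split; rewrite inE; apply/orP; [right; apply/VLP; left| left; apply/PKP; left];
        [by exists b| by exists a].
    + split; rewrite inE; apply/orP; [left; apply/PKP; right| right; apply/VLP; right];
        [by exists b| by exists a].
  rewrite in_setD1 aU andbT; apply/eqP => E.
  have := mxM b bU; rewrite -E; lia.
have Qlt : forall (j j' : 'I_L) a, j < j' -> Q j a -> Q j' a -> False.
  move=> j j' a jj' /QP[b [c [d [[tc cd dt ac db] HH]]]] /QP[b' [c' [d' [[tc' cd' dt' ac' db'] HH']]]].
  have j1 : j.+1 < size t by rewrite Lt; have := ltn_ord j'; lia.
  have j2 : j.+2 < size t by rewrite Lt; have := ltn_ord j'; lia.
  have AJ := Alt j j2.
  have Gj1 := G j.+1 j2.
  have t12 : nth u0 t j.+1 < nth u0 t j.+2 := nth_lt_sorted u0 ss (ltnSn _) j2.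
  case Uj: (up j) HH => -[M HC]; case Uj': (up j') HH' => -[M' HC'].
  + have jj : j.+2 <= j'.
      rewrite ltn_neqAle jj' andbT; apply/eqP => E.
      by move: Uj'; rewrite /up /= -E AJ -/(up j) Uj.
    have j's : j' < size t by rewrite Lt ltnS; apply: ltnW.
    have t2j : nth u0 t j.+2 <= nth u0 t j' := nth_le_sorted u0 ss jj j's.
    have ab1 : a <= b := leq_trans ac (leq_trans (ltnW cd) db).
    have ab2 : a <= b' := leq_trans ac' (leq_trans (ltnW cd') db').
    have [_ Ebb] := max_max M M' ab1 ab2.
    have [HM _] := maxsecP M; have /gascP[_ _ _ D] := HM.
    have at1 : a <= nth u0 t j.+1 := leq_trans ac (leq_trans (ltnW cd) dt).
    have t2b : nth u0 t j.+2 <= b.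
      rewrite Ebb; exact: leq_trans t2j (leq_trans tc' (leq_trans (ltnW cd') db')).
    have := D (nth u0 t j.+1) (nth u0 t j.+2) at1 t2b t12.
    have nt : ~~ (h (nth u0 t j.+1) < h (nth u0 t j.+2)) by rewrite AJ -/(up j) Uj.
    move=> HD; rewrite -leqNgt in nt; case/orP: Gj1 => g; clear -HD g nt k1; lia.
  + have [HM _] := maxsecP M; have [HM' _] := maxsecP M'; rewrite gasc_flp // in HM'.
    have /gascP[ab _ _ _] := HM; have /gdescP[ab' _ _ _] := HM'.
    exact: (asc_desc hi HM HM' ab ab').
  + have [HM _] := maxsecP M; have [HM' _] := maxsecP M'; rewrite gasc_flp // in HM.
    have /gascP[ab _ _ _] := HM'; have /gdescP[ab' _ _ _] := HM.
    exact: (asc_desc hi HM' HM ab ab').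
  + have jj : j.+2 <= j'.
      rewrite ltn_neqAle jj' andbT; apply/eqP => E.
      by move: Uj'; rewrite /up /= -E AJ -/(up j) Uj.
    have j's : j' < size t by rewrite Lt ltnS; apply: ltnW.
    have t2j : nth u0 t j.+2 <= nth u0 t j' := nth_le_sorted u0 ss jj j's.
    have ab1 : a <= b := leq_trans ac (leq_trans (ltnW cd) db).
    have ab2 : a <= b' := leq_trans ac' (leq_trans (ltnW cd') db').
    have [_ Ebb] := max_max M M' ab1 ab2.
    have [HM _] := maxsecP M; rewrite gasc_flp // in HM; have /gdescP[_ _ _ D] := HM.
    have at1 : a <= nth u0 t j.+1 := leq_trans ac (leq_trans (ltnW cd) dt).
    have t2b : nth u0 t j.+2 <= b.
      rewrite Ebb; exact: leq_trans t2j (leq_trans tc' (leq_trans (ltnW cd') db')).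
    have := D (nth u0 t j.+1) (nth u0 t j.+2) at1 t2b t12.
    have nt : h (nth u0 t j.+1) < h (nth u0 t j.+2) by rewrite AJ -/(up j) Uj.
    move=> HD; case/orP: Gj1 => g; clear -HD g nt k1; lia.
have Qinj : forall j j' a, Q j a -> Q j' a -> j = j'.
  move=> j j' a Qj Qj'; case: (ltngtP j j') => [lt|lt|E].
  - by exfalso; apply: (Qlt _ _ _ lt Qj Qj').
  - by exfalso; apply: (Qlt _ _ _ lt Qj' Qj).
  - exact: ord_inj.
pose f j := odflt u0 [pick a | Q j a].
have fQ : forall j, Q j (f j).
  move=> j; rewrite /f; case: pickP => [a //|none].
  by have [a Qa] := Qex j; rewrite none in Qa.
have finj : injective f.
  by move=> j j' E; apply: (Qinj j j' (f j)); [exact: fQ | rewrite E; exact: fQ].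
have sub : [set f j | j in 'I_L] \subset UU h :\ mx.
  by apply/subsetP => x /imsetP[j _ ->]; apply: (Qin j); exact: fQ.
have := subset_leq_card sub; rewrite card_imset // card_ord => Hc.
have := cardsD1 mx (UU h); rewrite mxU /= => Hd; by rewrite Hd add1n ltnS.
Qed.

End Gen.


Lemma good_w n (w : 'S_n) : good n.-1 (wv w).
Proof.
split.
- move=> i j E; apply: (@perm_inj _ w); apply: val_inj; exact: E.
- move=> x; rewrite /wv; have := ltn_ord (w x); lia.
Qed.

Section Perm.
Variables (n k : nat) (w : 'S_n).
Hypothesis k1 : 0 < k.

Lemma kpeaksE : kpeaks k w = PK k n.-1 (wv w).
Proof.
rewrite /PK (gasc_flp k1 (good_w w)).
by [].
Qed.

Lemma kvalleysE : kvalleys k w = VL k n.-1 (wv w).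
Proof.
rewrite /VL (gasc_flp k1 (good_w w)).
by [].
Qed.

Lemma UU_nonempty : 2 <= n -> k <= n - 1 -> exists u : 'I_n, u \in UU k n.-1 (wv w).
Proof.
move=> n2 kn.
have n0 : 0 < n by lia.
have nN : n.-1 < n by lia.
pose z0 : 'I_n := Ordinal n0; pose zN : 'I_n := Ordinal nN.
pose p0 := (w^-1)%g z0; pose p1 := (w^-1)%g zN.
have g0 : wv w p0 = 0 by rewrite /wv /p0 permKV.
have g1 : wv w p1 = n.-1 by rewrite /wv /p1 permKV.
have gh := good_w w.
case: (ltngtP p0 p1) => pp.
- have hk : wv w p0 + k <= wv w p1 by rewrite g0 g1; lia.
  have [c [d [_ _ Hcd]]] := kup_asc k1 pp hk.
  have [a [b [M _ _]]] := ex_max k1 Hcd.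
  exists b; rewrite inE; apply/orP; left; apply/PKP; left; by exists a.
- have hk : flp n.-1 (wv w) p1 + k <= flp n.-1 (wv w) p0 by rewrite /flp g0 g1; lia.
  have [c [d [_ _ Hcd]]] := kup_asc k1 pp hk.
  have [a [b [M _ _]]] := ex_max k1 Hcd.
  exists a; rewrite inE; apply/orP; left; apply/PKP; right; by exists b.
- exfalso; have := congr1 (wv w) (ord_inj pp); rewrite g0 g1; lia.
Qed.

End Perm.

Theorem proposition2p8 (n k : nat) :
  2 <= n -> 1 <= k <= n - 1 ->
  (forall w : 'S_n,
     [/\ kzigzag k (subseq_at w (kpeaks k w :|: kvalleys k w)),
         zs k w = #|kpeaks k w :|: kvalleys k w| &
         zs k w = #|kpeaks k w| + #|kvalleys k w|]) /\
  E_zs n k = (2%:R / (n`!)%:R * \sum_(w : 'S_n) (#|kpeaks k w|)%:R)%R.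
Proof.
move=> n2 /andP[k1 kn].
have n0 : 0 < n by lia.
pose x0 : 'I_n := Ordinal n0.
have part1 : forall w : 'S_n,
     [/\ kzigzag k (subseq_at w (kpeaks k w :|: kvalleys k w)),
         zs k w = #|kpeaks k w :|: kvalleys k w| &
         zs k w = #|kpeaks k w| + #|kvalleys k w|].
  move=> w; have gh := good_w w.
  rewrite (kpeaksE w k1) (kvalleysE w k1).
  have Z : kzigzag k (subseq_at w (UU k n.-1 (wv w))) := zig_UU k1 x0 gh.
  have E : zs k w = #|UU k n.-1 (wv w)|.
    apply/eqP; rewrite eqn_leq; apply/andP; split.
    - apply/bigmax_leqP => I ZI.
      have := zig_bound_seq k1 gh (@UU_nonempty n k w k1 n2 kn) (enum_sorted I) ZI.
      by rewrite -cardE.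
    - exact: (leq_bigmax_cond (F := fun I : {set 'I_n} => #|I|) _ Z).
  have D : PK k n.-1 (wv w) :&: VL k n.-1 (wv w) = set0.
    apply/setP => x; rewrite in_setI in_set0; apply/negP => /andP[xP xV].
    exact: (PK_VL k1 gh xP xV).
  split=> //; rewrite E /UU cardsU D cards0 subn0 //.
split=> // .
pose rv : 'S_n := perm (@rev_ord_inj n).
have flipw : forall w : 'S_n, wv (w * rv)%g = flp n.-1 (wv w).
  move=> w; apply: functional_extensionality => i.
  rewrite /wv /flp permM /rv permE /=; lia.
have VP : forall w : 'S_n, #|kvalleys k w| = #|kpeaks k (w * rv)%g|.
  move=> w; rewrite (kvalleysE w k1) (kpeaksE (w * rv)%g k1) flipw.
  by rewrite (PK_flp k1 (good_w w)).
have S : \sum_(w : 'S_n) zs k w = 2 * \sum_(w : 'S_n) #|kpeaks k w|.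
  rewrite mul2n -addnn.
  have -> : \sum_(w : 'S_n) zs k w = \sum_(w : 'S_n) (#|kpeaks k w| + #|kvalleys k w|).
    by apply: eq_bigr => w _; case: (part1 w).
  rewrite big_split /=; congr (_ + _).
  under eq_bigr do rewrite VP.
  exact: esym (reindex_inj (mulIg rv)).
rewrite /E_zs S natrM GRing.natr_sum.
by rewrite GRing.mulrAC.
Qed.
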